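(* For every graph $G$ and integer $m\ge1$, the lexicographic product $G\circ mK_1$ is well-bicovered if and only if $G$ is well-bicovered.
   Context: All graphs are finite and simple; ''subgraph'' means induced subgraph. $mK_1$ is the edgeless graph on $m$ vertices. A graph is well-bicovered if every vertex-inclusion-maximal induced bipartite subgraph has the same order. The lexicographic product $G\circ H$ has vertex set $V(G)\times V(H)$, with $(u,v)$ adjacent to $(x,y)$ iff $ux\in E(G)$, or $u=x$ and $vy\in E(H)$. *)

(* Defs.v *)
From mathcomp Require Import all_boot.
Set Implicit Arguments. Unset Strict Implicit. Unset Printing Implicit Defensive.

(* A finite simple graph: vertex type T : finType with an adjacency relation
   e : rel T that is symmetric and irreflexive (assumed in the theorem). *)

Section Graphs.
Variable T : finType.

Definition independent (e : rel T) (A : {set T}) : bool :=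
  [forall x in A, forall y in A, ~~ e x y].

Definition bipartite_set (e : rel T) (S : {set T}) : bool :=
  [exists A : {set T}, [&& A \subset S, independent e A & independent e (S :\: A)]].

Definition well_bicovered (e : rel T) : Prop :=
  forall S1 S2 : {set T},
    maxset (bipartite_set e) S1 -> maxset (bipartite_set e) S2 -> #|S1| = #|S2|.
End Graphs.

Definition lexprod (T U : finType) (e : rel T) (f : rel U) : rel (T * U) :=
  fun x y => e x.1 y.1 || ((x.1 == y.1) && f x.2 y.2).

Definition edgeless (m : nat) : rel 'I_m := fun _ _ => false.
Arguments edgeless m : clear implicits.

(* Main.v *)
Require Import Defs.
From mathcomp Require Import all_boot.
Set Implicit Arguments. Unset Strict Implicit. Unset Printing Implicit Defensive.

Lemma indepP (T : finType) (e : rel T) (A : {set T}) :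
  reflect (forall x y, x \in A -> y \in A -> ~~ e x y) (independent e A).
Proof.
apply: (iffP forall_inP) => [H x y xA yA | H x xA].
  by move/forall_inP: (H x xA); apply.
by apply/forall_inP => y yA; apply: H.
Qed.

Lemma bipP (T : finType) (e : rel T) (S : {set T}) :
  reflect (exists A : {set T}, [/\ A \subset S, independent e A & independent e (S :\: A)])
          (bipartite_set e S).
Proof.
apply: (iffP existsP) => [[A /and3P[a b c]] | [A [a b c]]]; exists A => //.
by apply/and3P.
Qed.

Lemma indep_sub (T : finType) (e : rel T) (A B : {set T}) :
  B \subset A -> independent e A -> independent e B.
Proof.
move=> /subsetP sBA /indepP H; apply/indepP => x y xB yB; apply: H; exact: sBA.
Qed.

Section Lex.
Variables (T : finType) (e : rel T) (m : nat).
Hypothesis m0 : 0 < m.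

Local Notation h := (lexprod e (edgeless m)).

Lemma hE x y : h x y = e x.1 y.1.
Proof. by rewrite /lexprod /edgeless andbF orbF. Qed.

Definition liftS (P : {set T}) : {set T * 'I_m} := [set x | x.1 \in P].

Lemma proj_lift (P : {set T}) : fst @: liftS P = P.
Proof.
apply/setP => v; apply/imsetP/idP => [[x]|vP].
  by rewrite inE => xP ->.
by exists (v, Ordinal m0); rewrite ?inE.
Qed.

Lemma sub_lift (S : {set T * 'I_m}) : S \subset liftS (fst @: S).
Proof. apply/subsetP => x xS; rewrite inE; exact: imset_f. Qed.

Lemma lift_sub (P Q : {set T}) : P \subset Q -> liftS P \subset liftS Q.
Proof. move/subsetP => s; apply/subsetP => x; rewrite !inE; exact: s. Qed.

Lemma card_lift (P : {set T}) : #|liftS P| = #|P| * m.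
Proof.
have ->: liftS P = setX P [set: 'I_m] by apply/setP => -[v i]; rewrite !inE andbT.
by rewrite cardsX cardsT card_ord.
Qed.

Lemma indep_proj (A : {set T * 'I_m}) : independent h A -> independent e (fst @: A).
Proof.
move/indepP => H; apply/indepP => _ _ /imsetP[x xA ->] /imsetP[y yA ->].
by rewrite -hE H.
Qed.

Lemma indep_twin (A X : {set T * 'I_m}) : independent h A ->
  (forall x, x \in X -> exists2 y, y \in A & y.1 = x.1) -> independent h X.
Proof.
move/indepP=> H tw; apply/indepP => x y xX yX.
have [x' x'A ex] := tw x xX; have [y' y'A ey] := tw y yX.
by rewrite hE -ex -ey -hE H.
Qed.

Lemma indep_lift (P : {set T}) : independent e P -> independent h (liftS P).
Proof.
move/indepP=> H; apply/indepP => x y; rewrite !inE hE; exact: H.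
Qed.

Lemma bip_proj (S : {set T * 'I_m}) : bipartite_set h S -> bipartite_set e (fst @: S).
Proof.
case/bipP => A [AS iA iB]; apply/bipP; exists (fst @: A); split.
- exact: imsetS.
- exact: indep_proj.
have: fst @: S :\: fst @: A \subset fst @: (S :\: A).
  apply/subsetP => v; rewrite inE => /andP[vA /imsetP[s sS ev]]; subst v.
  apply: imset_f; rewrite inE sS andbT.
  apply: contra vA => sA; exact: imset_f.
move/indep_sub; apply; exact: indep_proj.
Qed.

Lemma bip_lift (P : {set T}) : bipartite_set e P -> bipartite_set h (liftS P).
Proof.
case/bipP => A [AP iA iB]; apply/bipP; exists (liftS A); split.
- exact: lift_sub.
- exact: indep_lift.
have ->: liftS P :\: liftS A = liftS (P :\: A) by apply/setP => x; rewrite !inE.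
exact: indep_lift.
Qed.

Lemma max_lift_eq (S : {set T * 'I_m}) : maxset (bipartite_set h) S -> S = liftS (fst @: S).
Proof.
case/maxsetP => /bipP [A [AS iA iB]] Hmax.
apply: esym; apply: Hmax; last exact: sub_lift.
apply/bipP; exists (liftS (fst @: A)); split.
- apply: lift_sub; exact: imsetS.
- apply: (indep_twin iA) => x; rewrite inE => /imsetP[y yA ->].
  by exists y.
apply: (indep_twin iB) => x; rewrite !inE => /andP[xnA /imsetP[s sS ex]].
exists s; last by rewrite ex.
rewrite inE sS andbT.
apply: contra xnA => sA; rewrite ex; exact: imset_f.
Qed.

Lemma max_proj (S : {set T * 'I_m}) : maxset (bipartite_set h) S -> maxset (bipartite_set e) (fst @: S).
Proof.
move=> mS; have Seq := max_lift_eq mS; case/maxsetP: mS => bS Hmax.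
apply/maxsetP; split; first exact: bip_proj.
move=> Q bQ sQ.
have := Hmax (liftS Q) (bip_lift bQ).
rewrite {1}Seq => /(_ (lift_sub sQ)) eQ.
by rewrite -(proj_lift Q) eQ.
Qed.

Lemma max_lift (P : {set T}) : maxset (bipartite_set e) P -> maxset (bipartite_set h) (liftS P).
Proof.
case/maxsetP => bP Hmax; apply/maxsetP; split; first exact: bip_lift.
move=> S bS sS.
have eP : fst @: S = P.
  apply: Hmax; first exact: bip_proj.
  rewrite -{1}(proj_lift P); exact: imsetS.
apply/eqP; rewrite eqEsubset sS andbT -eP; exact: sub_lift.
Qed.

End Lex.

Theorem mainTheorem5 (T : finType) (e : rel T) (m : nat) :
  symmetric e -> irreflexive e -> 0 < m ->
  (well_bicovered (lexprod e (edgeless m)) <-> well_bicovered e).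
Proof.
move=> _ _ m0; split.
- move=> W P1 P2 M1 M2.
  have := W _ _ (max_lift m0 M1) (max_lift m0 M2).
  by rewrite !card_lift => /eqP; rewrite eqn_pmul2r // => /eqP.
- move=> W S1 S2 M1 M2.
  rewrite (max_lift_eq M1) (max_lift_eq M2) !card_lift.
  by rewrite (W _ _ (max_proj m0 M1) (max_proj m0 M2)).
Qed.
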